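(* Let $m\ge1$ and $l\ge1$ be integers and let $j\in\{1,\dots,m\}$. Then there exists a positive integer \[ D_{m,l}=\prod_{\substack{p\le \frac{m+1}{2}\\ p\text{ prime}}}p^{\nu_p},\qquad \nu_p\ge\left(\left\lfloor\frac jp\right\rfloor+\left\lfloor\frac{m-j}{p}\right\rfloor\right)v_p((l-1)!), \] such that $D_{m,l}^{-1}B^*_{k,j}(t)\in\mathbb{Z}[t]$ for all $k=0,1,\dots,m$.
   Context: $v_p$ is the $p$-adic valuation. For $k=0,\dots,m$ let $l^{(k)}_h=l$ for $h\ne k$ and $l^{(k)}_k=l-1$ ($h=0,\dots,m$), and $L=(m+1)l-1$. For $j,k\in\{0,\dots,m\}$ define $\sigma^{(k,j)}_i$ by $\prod_{h=0}^m(h-j-w)^{l^{(k)}_h}=\sum_{i=0}^L\sigma^{(k,j)}_iw^i$, and $B^*_{k,j}(t)=\frac{1}{(l-1)!}\sum_{i=0}^{L}t^{L-i}\,i!\,\sigma^{(k,j)}_i$. *)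

(* Defs.v *)
From HB Require Import structures.
From mathcomp Require Import all_boot all_order all_algebra.
Set Implicit Arguments. Unset Strict Implicit. Unset Printing Implicit Defensive.
Import Order.TTheory GRing.Theory Num.Theory.
Local Open Scope ring_scope.

Definition lexp (l k h : nat) : nat := if h == k then (l - 1)%N else l.

Definition Ldeg (m l : nat) : nat := ((m.+1 * l) - 1)%N.

(* prod_{h=0}^m (h - j - w)^{l^{(k)}_h}, as a polynomial in w over rat;
   its i-th coefficient is sigma^{(k,j)}_i *)
Definition sigma_poly (m l k j : nat) : {poly rat} :=
  \prod_(h < m.+1) ((h%:R - j%:R)%:P - 'X) ^+ lexp l k h.

Definition sigma (m l k j i : nat) : rat := (sigma_poly m l k j)`_i.

Definition Bstar (m l k j : nat) : {poly rat} :=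
  ((l - 1)`!%:R)^-1 *:
    \sum_(i < (Ldeg m l).+1) ((i`!)%:R * sigma m l k j i) *: 'X^(Ldeg m l - i).

(* Main.v *)
Require Import Defs.
From HB Require Import structures.
From mathcomp Require Import all_boot all_order all_algebra.
From mathcomp Require Import ring zify.
Import Order.TTheory GRing.Theory Num.Theory.

Lemma logn_fact_rec p k : prime p -> logn p k`! = k %/ p + logn p (k %/ p)`!.
Proof.
move=> pp; have p0 := prime_gt0 pp.
elim: k => [|k IH]; first by rewrite div0n fact0 logn1.
rewrite factS lognM ?fact_gt0 // divnS //.
case pk: (p %| k.+1) => /=.
  have -> : k.+1 = p * (k %/ p).+1.
    by rewrite -[in LHS](divnK pk) divnS // pk mulnC.
  rewrite lognM // logn_prime // eqxx IH factS lognM ?fact_gt0 //.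
  idtac.
  change (nat_of_bool true) with 1; lia.
by rewrite add0n logn_coprime ?prime_coprime ?pk // IH.
Qed.

Lemma logn_fact_le p k : prime p -> logn p k`! <= k.
Proof.
move=> pp; have p1 := prime_gt1 pp.
elim: k {-2}k (leqnn k) => [|n IH] k kn; first by move: kn; rewrite leqn0 => /eqP ->; rewrite fact0 logn1.
case: k kn => [|k] kn; first by rewrite fact0 logn1.
rewrite logn_fact_rec //.
have h1 : k.+1 %/ p < k.+1 by apply: ltn_Pdiv.
have h2 := IH (k.+1 %/ p) (leq_trans (h1 : _ <= k.+1) kn).
have h3 : k.+1 %/ p * p <= k.+1 := leq_trunc_div _ _.
have h4 : k.+1 %/ p * 2 <= k.+1 %/ p * p by rewrite leq_mul2l p1 orbT.
lia.
Qed.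

Lemma count_multL p n : 0 < p -> \sum_(0 <= i < n) (p %| i.+1) = n %/ p.
Proof.
move=> p0; elim: n => [|n IH]; first by rewrite big_geq // div0n.
by rewrite big_nat_recr //= IH divnS // addnC.
Qed.

Lemma count_multR p n : \sum_(0 <= h < n) (p %| n - h) = n %/ p.
Proof.
case: p => [|p].
  rewrite divn0 big1_seq // => i; rewrite mem_iota => /andP[_ h].
  rewrite dvd0n; case: eqP => //; lia.
elim: n => [|n IH]; first by rewrite big_geq // div0n.
rewrite big_nat_recl // subn0 divnS //=; congr (_ + _).
by rewrite -IH; apply: eq_bigr => i _; rewrite subSS.
Qed.

Lemma coprime_prod_dvd n (Q : pred nat) (f : nat -> nat) y :
  (forall p, prime p -> Q p -> p ^ f p %| y) ->
  \prod_(p < n | prime p && Q p) p ^ f p %| y.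
Proof.
move=> H; elim: n => [|n IH]; first by rewrite big_ord0 dvd1n.
rewrite big_mkcond big_ord_recr /= -big_mkcond /=.
case pn: (prime n && Q n); last by rewrite muln1.
case/andP: pn => pn qn.
rewrite Gauss_dvd ?IH ?H //.
apply: (big_ind (fun x => coprime x (n ^ f n))); first exact: coprime1n.
  by move=> x1 x2; rewrite coprimeMl => ->.
move=> i /andP[pi _]; apply: coprimeXl; apply: coprimeXr.
by rewrite prime_coprime // dvdn_prime2 // neq_ltn ltn_ord.
Qed.

Set Implicit Arguments. Unset Strict Implicit.
Local Open Scope ring_scope.

Definition Dv (d : nat) (x : rat) := exists2 z : int, x = z%:~R & (d%:Z %| z)%Z.
Definition W (d : nat) (f : {poly rat}) := forall i : nat, Dv d (i`!%:R * f`_i).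

Lemma Dv0 d : Dv d 0.
Proof. by exists 0 => //; exact: dvdz0. Qed.

Lemma DvD d x y : Dv d x -> Dv d y -> Dv d (x + y).
Proof.
move=> [z1 -> h1] [z2 -> h2]; exists (z1 + z2); first by rewrite rmorphD.
exact: rpredD.
Qed.

Lemma Dv_sum d n (F : 'I_n -> rat) : (forall i, Dv d (F i)) -> Dv d (\sum_(i < n) F i).
Proof.
move=> H; apply: (big_ind (Dv d)) => //; [exact: Dv0 | exact: DvD].
Qed.

Lemma DvM a b x y : Dv a x -> Dv b y -> Dv (a * b) (x * y).
Proof.
move=> [z1 -> h1] [z2 -> h2]; exists (z1 * z2); first by rewrite rmorphM.
by rewrite PoszM; apply: dvdz_mul.
Qed.

Lemma Dv_nat d k : (d %| k)%N -> Dv d k%:R.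
Proof. by move=> h; exists k%:Z => //; rewrite dvdzE. Qed.

Lemma Dv_weak d d' x : (d' %| d)%N -> Dv d x -> Dv d' x.
Proof.
move=> h [z -> hz]; exists z => //; apply: dvdz_trans hz; by rewrite dvdzE.
Qed.

Lemma W_weak d d' f : (d' %| d)%N -> W d f -> W d' f.
Proof. by move=> h H i; apply: Dv_weak (H i). Qed.

Lemma W1 : W 1 1.
Proof.
move=> i; rewrite coef1 -natrM; apply: Dv_nat; exact: dvd1n.
Qed.

Lemma W_mul a b f g : W a f -> W b g -> W (a * b) (f * g).
Proof.
move=> Hf Hg i; rewrite coefM mulr_sumr; apply: Dv_sum => r.
have ri : (r <= i)%N by rewrite -ltnS ltn_ord.
have -> : i`!%:R * (f`_r * g`_(i - r)) =
  'C(i, r)%:R * ((r`!%:R * f`_r) * ((i - r)`!%:R * g`_(i - r))) :> rat.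
  rewrite -(bin_fact ri) !natrM; ring.
have := DvM (Hf r) (Hg (i - r)%N) => -[z -> hz].
by exists ('C(i, r)%:Z * z); [rewrite rmorphM | apply: dvdz_mull].
Qed.

Lemma W_prod n (F : 'I_n -> {poly rat}) (d : 'I_n -> nat) :
  (forall h, W (d h) (F h)) -> W (\prod_(h < n) d h)%N (\prod_(h < n) F h).
Proof.
elim: n F d => [|n IH] F d H; first by rewrite !big_ord0; exact: W1.
rewrite !big_ord_recr /=; apply: W_mul; last exact: H.
by apply: IH => h; apply: H.
Qed.

Lemma W_monsum d N (a : nat -> rat) :
  (forall i, (i <= N)%N -> Dv d (i`!%:R * a i)) ->
  W d (\sum_(i < N.+1) a i *: 'X^i).
Proof.
move=> H k; rewrite coef_sum mulr_sumr; apply: Dv_sum => i.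
rewrite coefZ coefXn; case: (eqVneq k i) => [->|_].
  by rewrite mulr1; apply: H; rewrite -ltnS.
by rewrite mulr0 mulr0; exact: Dv0.
Qed.

Lemma lin_pow (c : rat) n :
  (c%:P - 'X)^+n = \sum_(i < n.+1) ((-1)^+i * 'C(n, i)%:R * c^+(n - i)) *: 'X^i.
Proof.
rewrite exprDn; apply: eq_bigr => i _.
rewrite -mul_polyC !rmorphM /= rmorphXn /= rmorphXn /= rmorphN /= rmorph1 rmorph_nat.
rewrite exprNn -mulr_natl; ring.
Qed.

Lemma factor_W (a : int) n d :
  (forall i, (i <= n)%N -> (d %| n ^_ i * `|a|%N ^ (n - i))%N) ->
  W d ((a%:~R%:P - 'X)^+n).
Proof.
move=> H; rewrite lin_pow.
apply: (W_monsum (a := fun i : nat => (-1)^+i * 'C(n, i)%:R * (a%:~R)^+(n - i))) => i hi.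
exists ((-1)^+i * (n ^_ i)%:Z * a^+(n - i)).
  rewrite -bin_ffact !rmorphM /= !rmorphXn /= rmorphN1 /=.
  ring.
rewrite -mulrA; apply: dvdz_mull; rewrite dvdzE abszM abszX /=; exact: H.
Qed.

Lemma factor_W1 (a : int) n : W 1 ((a%:~R%:P - 'X)^+n).
Proof. by apply: factor_W => i _; rewrite dvd1n. Qed.

Lemma factor_W0 n : W n`! ((0%:~R%:P - 'X)^+n).
Proof.
apply: factor_W => i hi /=; case: (ltnP i n) => h.
  by rewrite exp0n ?subn_gt0 // muln0 dvdn0.
have -> : i = n by apply/eqP; rewrite eqn_leq hi h.
by rewrite ffactnn dvdn_mulr.
Qed.

Lemma factor_Wp (a : int) n p : prime p -> (p %| `|a|)%N ->
  W (p ^ logn p n`!) ((a%:~R%:P - 'X)^+n).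
Proof.
move=> pp pa; apply: factor_W => i hi.
apply: (@dvdn_trans (n ^_ i * p ^ (n - i))); last first.
  by apply: dvdn_mul => //; apply: dvdn_exp2r.
have f0 : (0 < n ^_ i)%N by rewrite ffact_gt0.
rewrite pfactor_dvdn // ?muln_gt0 ?f0 ?expn_gt0 ?prime_gt0 //.
rewrite lognM // ?expn_gt0 ?prime_gt0 // lognX (logn_prime p pp) eqxx muln1.
rewrite -(ffact_fact hi) lognM ?fact_gt0 // leq_add2l.
exact: logn_fact_le.
Qed.

Definition Ncnt (m j p : nat) : nat :=
  (\sum_(h < m.+1) ((h != j :> nat) && (p %| `|(h%:Z - j%:Z)%R|)%N : nat))%N.

Lemma fact_dvd_le a b : (a <= b)%N -> (a`! %| b`!)%N.
Proof.
move=> ab; rewrite -(ffact_fact (leq_subr a b)) subKn //; exact: dvdn_mull.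
Qed.

Lemma sigma_W m l k j p : (j <= m)%N -> prime p ->
  W ((l-1)`! * p ^ (logn p (l-1)`! * Ncnt m j p))%N (sigma_poly m l k j).
Proof.
move=> jm pp.
set E := (l-1)`!; set e := logn p E.
pose c (h : 'I_m.+1) := ((h != j :> nat) && (p %| `|(h%:Z - j%:Z)%R|)%N : nat).
pose d (h : 'I_m.+1) := ((if h == j :> nat then E else 1) * p ^ (e * c h))%N.
have -> : (E * p ^ (e * Ncnt m j p))%N = (\prod_(h < m.+1) d h)%N.
  rewrite big_split /= -expn_sum -big_distrr /=.
  congr (_ * _)%N.
  have jm1 : (j < m.+1)%N by [].
  rewrite (bigD1 (Ordinal jm1)) //= eqxx big1 ?muln1 // => i /eqP hi.
  case: eqP => // hij; case: hi; exact: val_inj.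
apply: W_prod => h.
have -> : (h%:R - j%:R : rat) = (h%:Z - j%:Z)%:~R by rewrite rmorphB.
set n := lexp l k h.
have hn : (l - 1 <= n)%N by rewrite /n /lexp; case: ifP => _ //; exact: leq_subr.
have En : (E %| n`!)%N by apply: fact_dvd_le.
rewrite /d /c; case: eqP => [hj|hj].
  rewrite hj /= muln0 expn0 muln1 subrr.
  exact: W_weak En (factor_W0 n).
rewrite mul1n /=.
case pd: (p %| `|(h%:Z - j%:Z)%R|)%N.
  rewrite muln1; apply: (@W_weak (p ^ logn p n`!)%N); last exact: factor_Wp.
  apply: dvdn_exp2l; apply: dvdn_leq_log => //; exact: fact_gt0.
by rewrite muln0 expn0; exact: factor_W1.
Qed.

Lemma Ncnt_ge m j p : (0 < p)%N -> (j <= m)%N ->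
  (j %/ p + (m - j) %/ p <= Ncnt m j p)%N.
Proof.
move=> p0 jm; rewrite /Ncnt -(big_mkord xpredT (fun h => ((h != j) && (p %| `|(h%:Z - j%:Z)%R|)%N : nat))) (big_cat_nat _ (n := j)) //=; last by apply: leqW.
apply: leq_add.
  rewrite -count_multR; apply: eq_leq; apply: eq_big_nat => h /andP[_ hj].
  by rewrite neq_ltn hj /= distnEr // ltnW.
rewrite big_ltn ?ltnS // eqxx /= add0n -{1}[j.+1]add0n big_addn subSS -count_multL //.
apply: eq_leq; apply: eq_big_nat => i _.
have h1 : (j <= i + j.+1)%N by rewrite addnS ltnW // ltnS leq_addl.
have -> : ((i + j.+1)%N != j) = true by rewrite gtn_eqF // addnS ltnS leq_addl.
by rewrite distnEl // addnS subSn ?leq_addl // addnK.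
Qed.

Theorem theorem6p2 (m l j : nat) :
  (1 <= m)%N -> (1 <= l)%N -> (1 <= j <= m)%N ->
  exists nu : nat -> nat,
    (forall p : nat, prime p -> (p.*2 <= m.+1)%N ->
       ((j %/ p + (m - j) %/ p) * logn p (l - 1)`! <= nu p)%N) /\
    let D := (\prod_(p < m.+2 | prime p && (p.*2 <= m.+1)%N) p ^ nu p)%N in
    (0 < D)%N /\
    forall k : nat, (k <= m)%N ->
      (D%:R : rat)^-1 *: Bstar m l k j \is a polyOver Num.int.
Proof.
move=> m1 l1 /andP[j1 jm].
set E := (l - 1)`!.
have E0 : (0 < E)%N by apply: fact_gt0.
exists (fun p => logn p E * Ncnt m j p)%N; split.
  move=> p pp _; rewrite mulnC leq_mul2l Ncnt_ge ?prime_gt0 // orbT //.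
move=> D.
have D0 : (0 < D)%N.
  rewrite /D big_mkcond; apply: prodn_gt0 => p; case: ifP => // /andP[pp _]; by rewrite expn_gt0 prime_gt0.
split => // k km.
rewrite /Bstar; apply/polyOverP => n.
rewrite !coefZ coef_sum mulr_sumr mulr_sumr; apply: rpred_sum => i _.
rewrite coefZ coefXn !mulrA -[_ * _ * _ * sigma m l k j i]mulrA -mulrA.
apply: rpredM; last exact: rpred_nat.
set x := i`!%:R * sigma m l k j i.
have pr2 : prime 2 by [].
have [z xz Ez] : exists2 z : int, x = z%:~R & (E %| `|z|)%N.
  case: (@sigma_W m l k j 2 jm pr2 i) => z xz hz; exists z => //.
  move: hz; rewrite dvdzE /= => hz; apply: dvdn_trans hz; exact: dvdn_mulr.
set y := (`|z| %/ E)%N.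
have zy : `|z|%N = (E * y)%N by rewrite mulnC divnK.
have Dy : (D %| y)%N.
  apply: (@coprime_prod_dvd m.+2 (fun p => p.*2 <= m.+1)%N (fun p => logn p E * Ncnt m j p)%N).
  move=> p pp _.
  case: (@sigma_W m l k j p jm pp i) => z' xz' hz'.
  have zz : z' = z by apply: (@intr_inj rat); rewrite -xz -xz'.
  move: hz'; rewrite zz dvdzE /= zy dvdn_pmul2l //.
have [q zq] : exists q, z = q * (E * D)%N%:Z.
  by apply/dvdzP; rewrite dvdzE /= zy dvdn_pmul2l.
rewrite -/E.
have -> : (D%:R)^-1 * ((E%:R)^-1 * x) = q%:~R :> rat.
  have E0' : (E%:R : rat) != 0 by rewrite pnatr_eq0 -lt0n.
  have D0' : (D%:R : rat) != 0 by rewrite pnatr_eq0 -lt0n.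
  rewrite xz zq rmorphM /=.
  rewrite (_ : ((E * D)%N%:~R) = (E * D)%N%:R :> rat) // natrM.
  field; rewrite E0' D0' //.
exact: intr_int.
Qed.
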